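(* Let $G=(V,E)$ be a chordal graph and $T$ a spanning tree of $G$ rooted in $s\in V$. Then $T$ is an $\mathcal L$-tree of LexDFS of $G$ if and only if $T$ is an $\mathcal L$-tree of LexBFS of $G$.
   Context: Graphs are finite, simple, undirected and connected. A graph is chordal if it has no induced cycle of length greater than 3. LexDFS started at $s$: label $s$ with $(0)$, all other vertices with the empty label; for $i=1,\dots,n$ pick an unnumbered vertex $v$ with lexicographically largest label, set $\sigma(i)=v$, and prepend $i$ to the label of each unnumbered neighbor of $v$. LexBFS started at $s$: label $s$ with $(n)$, others empty; same loop but append $n-i$ to the label of each unnumbered neighbor of $v$. Orders of these searches are all possible outputs. The $\mathcal L$-tree of a vertex order $(v_1,\dots,v_n)$ is the spanning tree rooted at $v_1$ with an edge from each $v_i$ ($i>1$) to its rightmost neighbor $v_j$ with $j<i$. A spanning tree $T$ rooted at $s$ is an $\mathcal L$-tree of a search $\mathcal P$ of $G$ if some $\mathcal P$-order of $G$ starting at $s$ has $\mathcal L$-tree $T$. *)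

(* Defs.v *)
From mathcomp Require Import all_boot.
Set Implicit Arguments. Unset Strict Implicit. Unset Printing Implicit Defensive.

Definition simple_graph (T : finType) (e : rel T) : Prop :=
  symmetric e /\ irreflexive e.

Definition connected_graph (T : finType) (e : rel T) : Prop :=
  forall x y : T, connect e x y.

Definition induced_cycle (T : finType) (e : rel T) (c : seq T) : bool :=
  [&& uniq c, 3 < size c &
   [forall i : 'I_(size c), forall j : 'I_(size c),
      e (tnth (in_tuple c) i) (tnth (in_tuple c) j) ==
      ((j == i.+1 %% size c :> nat) || (i == j.+1 %% size c :> nat))]].

Definition chordal (T : finType) (e : rel T) : Prop :=
  forall c : seq T, ~~ induced_cycle e c.

(* lexicographic order on labels (a proper prefix is smaller) *)
Fixpoint lexle (a b : seq nat) : bool :=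
  match a, b with
  | [::], _ => true
  | _ :: _, [::] => false
  | x :: a', y :: b' => (x < y) || ((x == y) && lexle a' b')
  end.

(* Label of an unnumbered vertex w after the vertices of p have been
   numbered 1, ..., size p (in this order). *)
Definition lexdfs_label (T : finType) (e : rel T) (s : T) (p : seq T) (w : T)
  : seq nat :=
  foldl (fun l (iu : nat * T) => if e iu.2 w then iu.1 :: l else l)
        (if w == s then [:: 0] else [::]) (zip (iota 1 (size p)) p).

Definition lexbfs_label (T : finType) (e : rel T) (s : T) (p : seq T) (w : T)
  : seq nat :=
  foldl (fun l (iu : nat * T) => if e iu.2 w then rcons l (#|T| - iu.1) else l)
        (if w == s then [:: #|T|] else [::]) (zip (iota 1 (size p)) p).

Definition vertex_order (T : finType) (sigma : seq T) : bool :=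
  uniq sigma && (size sigma == #|T|).

Definition search_order (T : finType) (lab : seq T -> T -> seq nat)
  (s : T) (sigma : seq T) : Prop :=
  vertex_order sigma /\ ohead sigma = Some s /\
  forall (p q : seq T) (v : T), sigma = p ++ v :: q ->
    forall w, w \in v :: q -> lexle (lab p w) (lab p v).

Definition LexDFS_order (T : finType) (e : rel T) (s : T) (sigma : seq T) :=
  search_order (lexdfs_label e s) s sigma.
Definition LexBFS_order (T : finType) (e : rel T) (s : T) (sigma : seq T) :=
  search_order (lexbfs_label e s) s sigma.

Definition edge_rel (T : finType) (F : {set {set T}}) : rel T :=
  fun x y => [set x; y] \in F.

Definition spanning_tree (T : finType) (e : rel T) (F : {set {set T}}) : Prop :=
  (forall f, f \in F -> exists x y, e x y /\ f = [set x; y]) /\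
  (forall x y : T, connect (edge_rel F) x y) /\
  #|F| = #|T|.-1.

(* The L-tree of a vertex order: edge from each v_i (i > 1) to its rightmost
   neighbour v_j with j < i. *)
Definition Ltree (T : finType) (e : rel T) (sigma : seq T) : {set {set T}} :=
  [set f | [exists i : 'I_(size sigma), exists j : 'I_(size sigma),
     let vi := tnth (in_tuple sigma) i in
     let vj := tnth (in_tuple sigma) j in
     [&& (j < i)%N, e vj vi,
         [forall k : 'I_(size sigma),
            ((j < k)%N && (k < i)%N) ==> ~~ e (tnth (in_tuple sigma) k) vi] &
         f == [set vi; vj]]]].

Definition is_LexDFS_Ltree (T : finType) (e : rel T) (s : T) (F : {set {set T}}) :=
  exists sigma, LexDFS_order e s sigma /\ Ltree e sigma = F.
Definition is_LexBFS_Ltree (T : finType) (e : rel T) (s : T) (F : {set {set T}}) :=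
  exists sigma, LexBFS_order e s sigma /\ Ltree e sigma = F.

(* Main.v *)
Require Import Defs.
From mathcomp Require Import all_boot zify.
Set Implicit Arguments. Unset Strict Implicit. Unset Printing Implicit Defensive.

Lemma lexle_refl a : lexle a a.
Proof. by elim: a => //= x a ->; rewrite eqxx orbT. Qed.

Lemma lexle_trans a b c : lexle a b -> lexle b c -> lexle a c.
Proof.
elim: a b c => [|x a IH] [|y b] [|z c] //=.
case/orP=> [lxy|/andP[/eqP <- hab]]; case/orP=> [lyz|/andP[/eqP <- hbc]].
- by rewrite (ltn_trans lxy lyz).
- by rewrite lxy.
- by rewrite lyz.
- by rewrite eqxx (IH _ _ hab hbc) orbT.
Qed.

Lemma lexle_total a b : lexle a b || lexle b a.
Proof.
elim: a b => [|x a IH] [|y b] //=.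
case: (ltngtP x y) => //= ->; by rewrite eqxx /= IH.
Qed.

Definition gtn_rel : rel nat := fun x y => y < x.
Lemma gtn_trans : transitive gtn_rel.
Proof. by move=> y x z /= h1 h2; exact: ltn_trans h2 h1. Qed.

Lemma lexle_sub a b : sorted gtn_rel a -> sorted gtn_rel b ->
  {subset a <= b} -> lexle a b.
Proof.
elim: a b => [|x a IH] [|y b] //=.
- by move=> _ _ /(_ x); rewrite mem_head => /(_ erefl).
move=> sa sb sub.
have xb : x \in y :: b by apply: sub; rewrite mem_head.
have xley : x <= y.
  move: xb; rewrite in_cons => /orP[/eqP -> //|xb].
  have := (order_path_min gtn_trans sb).
  by move=> /allP /(_ _ xb) /ltnW.
case: (ltngtP x y) xley => // exy _; subst y => /=.
apply: IH; first exact: path_sorted sa.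
  exact: path_sorted sb.
move=> z za.
have zx : z < x.
  have := (order_path_min gtn_trans sa).
  by move=> /allP /(_ _ za).
have : z \in x :: b by apply: sub; rewrite in_cons za orbT.
rewrite in_cons => /orP[/eqP ezy|//]; subst z; by rewrite ltnn in zx.
Qed.

Lemma lexle_strict a b : sorted gtn_rel a -> sorted gtn_rel b ->
  {subset a <= b} -> (exists2 z, z \in b & z \notin a) -> ~~ lexle b a.
Proof.
elim: a b => [|x a IH] [|y b] //=.
- by move=> _ _ _ [z]. 
- by move=> _ _ /(_ x); rewrite mem_head => /(_ erefl).
move=> sa sb sub [z zb za].
have xb : x \in y :: b by apply: sub; rewrite mem_head.
have xley : x <= y.
  move: xb; rewrite in_cons => /orP[/eqP -> //|xb].
  have := (order_path_min gtn_trans sb).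
  by move=> /allP /(_ _ xb) /ltnW.
case: (ltngtP x y) xley => // exy _.
subst y => /=.
have sub' : {subset a <= b}.
  move=> t ta.
  have tx : t < x.
    have := (order_path_min gtn_trans sa).
    by move=> /allP /(_ _ ta).
  have : t \in x :: b by apply: sub; rewrite in_cons ta orbT.
  rewrite in_cons => /orP[/eqP ety|//]; subst t; by rewrite ltnn in tx.
apply: IH => //; first exact: path_sorted sa.
  exact: path_sorted sb.
exists z => //.
  move: zb; rewrite in_cons => /orP[/eqP ezy|//].
  by move: za; rewrite ezy mem_head.
by move: za; rewrite in_cons negb_or => /andP[].
Qed.

Section Labels.
Variable T : finType.
Variable e : rel T.
Variable s : T.

Definition goodlab (lab : seq T -> T -> seq nat) :=
  [/\ (forall w, lexle (lab [::] w) (lab [::] s)),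
   (forall p w v, uniq p -> s \in p -> w \notin p -> v \notin p ->
      (forall x, x \in p -> e x w -> e x v) -> lexle (lab p w) (lab p v)) &
   (forall p w v, uniq p -> s \in p -> w \notin p -> v \notin p ->
      (forall x, x \in p -> e x w -> e x v) ->
      (exists2 x, x \in p & e x v && ~~ e x w) -> ~~ lexle (lab p v) (lab p w))].

Definition Jl (p : seq T) (w : T) : seq nat :=
  [seq iu.1 | iu <- zip (iota 1 (size p)) p & e iu.2 w].

Lemma dfs_fold w (z : seq (nat * T)) l0 :
  foldl (fun l (iu : nat * T) => if e iu.2 w then iu.1 :: l else l) l0 z
  = rev [seq iu.1 | iu <- z & e iu.2 w] ++ l0.
Proof.
elim: z l0 => [|iu z IH] l0 //=.
rewrite IH; case: (e iu.2 w) => //=.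
by rewrite rev_cons cat_rcons.
Qed.

Lemma bfs_fold w (z : seq (nat * T)) l0 n :
  foldl (fun l (iu : nat * T) => if e iu.2 w then rcons l (n - iu.1) else l) l0 z
  = l0 ++ [seq n - iu.1 | iu <- z & e iu.2 w].
Proof.
elim: z l0 => [|iu z IH] l0 /=; first by rewrite cats0.
rewrite IH; case: (e iu.2 w) => //=.
by rewrite cat_rcons.
Qed.

Lemma mem_zip_iota (p : seq T) i u :
  ((i, u) \in zip (iota 1 (size p)) p) = (0 < i <= size p) && (u == nth s p i.-1).
Proof.
apply/idP/idP.
- case/(nthP (0, s)) => k; rewrite size_zip size_iota minnn => kp.
  rewrite nth_zip ?size_iota // nth_iota // => -[<- <-].
  by rewrite /= kp eqxx; lia.
- case/andP => /andP[i0 ip] /eqP ->.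
  have k : i.-1 < size p by lia.
  have -> : (i, nth s p i.-1) = nth (0, s) (zip (iota 1 (size p)) p) i.-1.
    by rewrite nth_zip ?size_iota // nth_iota //; congr pair; lia.
  by apply: mem_nth; rewrite size_zip size_iota minnn.
Qed.

Lemma mem_Jl p w i : (i \in Jl p w) = (0 < i <= size p) && e (nth s p i.-1) w.
Proof.
apply/mapP/idP.
- case=> [[j u]]; rewrite mem_filter /= => /andP[euw]; rewrite mem_zip_iota.
  by case/andP => jp /eqP eu ->; rewrite jp -eu.
- case/andP=> ip ew; exists (i, nth s p i.-1) => //.
  by rewrite mem_filter /= ew mem_zip_iota ip eqxx.
Qed.

Lemma Jl_sorted p w : sorted ltn (Jl p w).
Proof.
have : subseq (Jl p w) (iota 1 (size p)).
  have -> : iota 1 (size p) = [seq iu.1 | iu <- zip (iota 1 (size p)) p].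
    by rewrite -/(unzip1 _) unzip1_zip // size_iota.
  by apply: map_subseq; apply: filter_subseq.
move/subseq_sorted; apply; first exact: ltn_trans.
exact: iota_ltn_sorted.
Qed.

Lemma Jl_sub p w v : (forall x, x \in p -> e x w -> e x v) -> {subset Jl p w <= Jl p v}.
Proof.
move=> h i; rewrite !mem_Jl => /andP[ip ew]; rewrite ip /=.
apply: h ew; apply: mem_nth; case/andP: ip; by case: (i).
Qed.

Lemma Jl_strict p w v x : x \in p -> e x v -> ~~ e x w ->
  exists2 i, i \in Jl p v & i \notin Jl p w.
Proof.
move=> xp exv exw; exists (index x p).+1.
  by rewrite mem_Jl /= nth_index // exv index_mem xp.
by rewrite mem_Jl /= nth_index // (negbTE exw) andbF.
Qed.

Lemma Jl_le p w i : i \in Jl p w -> i <= size p.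
Proof. by rewrite mem_Jl => /andP[/andP[_ ->]]. Qed.

Lemma dfs_label_eq p w : w != s -> lexdfs_label e s p w = rev (Jl p w).
Proof.
by move=> ws; rewrite /lexdfs_label dfs_fold (negbTE ws) cats0.
Qed.

Lemma bfs_label_eq p w : w != s -> lexbfs_label e s p w = [seq #|T| - i | i <- Jl p w].
Proof.
by move=> ws; rewrite /lexbfs_label bfs_fold (negbTE ws) /= map_comp.
Qed.

Lemma sorted_rev_gtn l : sorted ltn l -> sorted gtn_rel (rev l).
Proof. by rewrite rev_sorted. Qed.

Lemma sorted_map_sub n l : sorted ltn l -> all (fun i => i <= n) l ->
  sorted gtn_rel [seq n - i | i <- l].
Proof.
case: l => //= x l.
elim: l x => //= y l IH x /andP[xy pl] /and3P[xn yn al].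
rewrite IH ?yn ?al // andbT /gtn_rel; lia.
Qed.

Lemma uniq_size_le (p : seq T) : uniq p -> size p <= #|T|.
Proof. by move/card_uniqP <-; apply: max_card. Qed.

Lemma goodlab_dfs : goodlab (lexdfs_label e s).
Proof.
split.
- move=> w; rewrite /lexdfs_label /= eqxx; case: (w == s) => //=.
- move=> p w v up sp wp vp h.
  have ws : w != s by apply: contraNneq wp => ->.
  have vs : v != s by apply: contraNneq vp => ->.
  rewrite !dfs_label_eq //; apply: lexle_sub; try exact: sorted_rev_gtn (Jl_sorted _ _).
  by move=> i; rewrite !mem_rev; apply: Jl_sub.
- move=> p w v up sp wp vp h [x xp /andP[exv exw]].
  have ws : w != s by apply: contraNneq wp => ->.
  have vs : v != s by apply: contraNneq vp => ->.
  rewrite !dfs_label_eq //; apply: lexle_strict; try exact: sorted_rev_gtn (Jl_sorted _ _).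
    by move=> i; rewrite !mem_rev; apply: Jl_sub.
  by have [i iv iw] := Jl_strict xp exv exw; exists i; rewrite mem_rev.
Qed.

Lemma goodlab_bfs : goodlab (lexbfs_label e s).
Proof.
have srt : forall p w, uniq p -> sorted gtn_rel [seq #|T| - i | i <- Jl p w].
  move=> p w up; apply: sorted_map_sub; first exact: Jl_sorted.
  apply/allP => i /Jl_le ip; have := uniq_size_le up; lia.
split.
- move=> w; rewrite /lexbfs_label /= eqxx; case: (w == s) => //=.
  by rewrite ltnn eqxx.
- move=> p w v up sp wp vp h.
  have ws : w != s by apply: contraNneq wp => ->.
  have vs : v != s by apply: contraNneq vp => ->.
  rewrite !bfs_label_eq //; apply: lexle_sub; try exact: srt.
  move=> k /mapP [i iw ->]; apply: map_f; exact: Jl_sub iw.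
- move=> p w v up sp wp vp h [x xp /andP[exv exw]].
  have ws : w != s by apply: contraNneq wp => ->.
  have vs : v != s by apply: contraNneq vp => ->.
  rewrite !bfs_label_eq //; apply: lexle_strict; try exact: srt.
    move=> k /mapP [i iw ->]; apply: map_f; exact: Jl_sub iw.
  have [i iv iw] := Jl_strict xp exv exw; exists (#|T| - i); first exact: map_f.
  apply/mapP => -[j jw eq].
  have := Jl_le iv; have := Jl_le jw; have := uniq_size_le up => h1 h2 h3.
  have eij : i = j by lia.
  by move: iw; rewrite eij jw.
Qed.

End Labels.

Section Chord.
Variable T : finType.
Variable e : rel T.
Hypothesis esym : symmetric e.
Hypothesis eirr : irreflexive e.
Variable x0 : T.

Notation "P `_ i" := (nth x0 P i).

Definition walk (P : seq T) := forall i, i.+1 < size P -> e P`_i P`_i.+1.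

Definition chordless (P : seq T) :=
  forall i j, i < size P -> j < size P -> e P`_i P`_j -> (j == i.+1) || (i == j.+1).

Lemma modn_le k n : 0 < n -> k <= n -> k %% n = if k == n then 0 else k.
Proof.
move=> n0 kn; case: eqP => [->|ne]; first by rewrite modnn.
by rewrite modn_small //; lia.
Qed.

Lemma cycle_induced (Q : seq T) d :
  uniq Q -> chordless Q -> walk Q -> 3 <= size Q -> d \notin Q ->
  e d Q`_0 -> e d Q`_(size Q).-1 ->
  (forall i, 0 < i -> i < (size Q).-1 -> ~~ e d Q`_i) ->
  induced_cycle e (d :: Q).
Proof.
move=> uQ cQ wQ sQ dQ d0 dl dmid.
apply/and3P; split; first by rewrite /= dQ uQ.
  by rewrite /=; lia.
apply/forallP => i; apply/forallP => j; rewrite !(tnth_nth x0) /=.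
have n0 : 0 < (size Q).+1 by [].
have h1 : 1 %% (size Q).+1 = 1 by rewrite modn_small //; lia.
case: i => [[|i] /= hi]; case: j => [[|j] /= hj].
- by rewrite eirr h1.
- rewrite (@modn_le (j.+2) (size Q).+1 n0 hj).
  rewrite h1.
  case: (eqVneq j 0) => [->|j0]; first by rewrite d0.
  case: (eqVneq j (size Q).-1) => [jl|jl].
    have -> : j.+2 == (size Q).+1 by apply/eqP; lia.
    by rewrite jl dl eqxx orbT.
  rewrite (negbTE (dmid j _ _)); try lia.
  case: ifP => [/eqP|_]; first lia.
  by apply/eqP; symmetry; apply/negbTE; rewrite negb_or; apply/andP; split; apply/eqP; lia.
- rewrite esym.
  rewrite (@modn_le (i.+2) (size Q).+1 n0 hi).
  rewrite h1.
  case: (eqVneq i 0) => [->|i0]; first by rewrite d0 orbC.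
  case: (eqVneq i (size Q).-1) => [il|il].
    have -> : i.+2 == (size Q).+1 by apply/eqP; lia.
    by rewrite il dl eqxx.
  rewrite (negbTE (dmid i _ _)); try lia.
  case: ifP => [/eqP|_]; first lia.
  by apply/eqP; symmetry; apply/negbTE; rewrite negb_or; apply/andP; split; apply/eqP; lia.
- rewrite (@modn_le (i.+2) (size Q).+1 n0 hi).
  rewrite (@modn_le (j.+2) (size Q).+1 n0 hj).
  have wl : forall a b, a < size Q -> b < size Q -> (b == a.+1) -> e Q`_a Q`_b.
    by move=> a b ha hb /eqP eb; subst b; exact: wQ.
  apply/eqP; case E: (e Q`_i Q`_j).
  + have := cQ i j ltac:(lia) ltac:(lia) E.
    case/orP => /eqP h; subst.
      have -> : (i.+2 == (size Q).+1) = false by apply/eqP; lia.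
      by rewrite eqxx.
    have -> : (j.+2 == (size Q).+1) = false by apply/eqP; lia.
    by rewrite eqxx orbT.
  + symmetry; apply/negbTE; rewrite negb_or; apply/andP; split.
      case: ifP => [/eqP h|_]; first by [].
      apply/negP => /eqP h; have : e Q`_i Q`_j by apply: wl; lia.
      by rewrite E.
    case: ifP => [/eqP h|_]; first by [].
    apply/negP => /eqP h; have : e Q`_j Q`_i by apply: wl; lia.
    by rewrite esym E.
Qed.


Hypothesis chord : chordal e.

Lemma no_fan (Q : seq T) d :
  uniq Q -> chordless Q -> walk Q -> 3 <= size Q -> d \notin Q ->
  e d Q`_0 -> e d Q`_(size Q).-1 -> ~~ e d Q`_1 -> False.
Proof.
move=> uQ cQ wQ sQ dQ d0 dl d1.
have ex : exists j, (0 < j) && (j < size Q) && e d Q`_j.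
  by exists (size Q).-1; rewrite dl andbT; apply/andP; split; lia.
case: (ex_minnP ex) => j /andP[/andP[j0 jQ] dj] jmin.
have j1 : 1 < j.
  case: j j0 jQ dj jmin => [|[|j]] //; by rewrite (negbTE d1).
set Q' := take j.+1 Q.
have sQ' : size Q' = j.+1 by rewrite size_takel.
have nQ' : forall i, i < j.+1 -> Q'`_i = Q`_i by move=> i hi; rewrite nth_take.
apply: (negP (chord (d :: Q'))).
apply: (@cycle_induced Q' d).
- exact: take_uniq.
- move=> a b ha hb; rewrite sQ' in ha hb; rewrite !nQ' //; apply: cQ; lia.
- move=> a ha; rewrite sQ' in ha; rewrite !nQ' //; try lia; apply: wQ; lia.
- by rewrite sQ'.
- by apply: contra dQ; apply: mem_take.
- by rewrite nQ'.
- by rewrite sQ' /= nQ'.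
- move=> i i0 ij; rewrite sQ' /= in ij; rewrite nQ'; last lia.
  apply/negP => di; have := jmin i; rewrite i0 di andbT => /(_ ltac:(apply/andP; split; [done|lia])).
  lia.
Qed.


Variable r : T -> nat.
Hypothesis rinj : injective r.
Hypothesis Pprop : forall a b c, r a < r b -> r b < r c -> e a c -> ~~ e a b ->
  exists2 d, r d < r b & e d b && ~~ e d c.

Definition bad u w P := [/\ u != w, ~~ e u w, 1 < size P, P`_0 = u &
  P`_(size P).-1 = w] /\ walk P /\
  (forall x, x \in P -> x != u -> x != w -> (r u < r x) && (r w < r x)).

Lemma nth_splice (P : seq T) i k m : i < k -> k <= size P ->
  (take i.+1 P ++ drop k P)`_m = if m < i.+1 then P`_m else P`_(k + (m - i.+1)).
Proof.
move=> ik kP; rewrite nth_cat size_takel; last lia.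
case: ifP => h; first by rewrite nth_take.
by rewrite nth_drop.
Qed.

Lemma splice u w P i k : bad u w P -> i.+1 < k -> k <= size P ->
  (k < size P -> e P`_i P`_k) -> (k = size P -> P`_i = w) ->
  bad u w (take i.+1 P ++ drop k P) /\ size (take i.+1 P ++ drop k P) < size P.
Proof.
case=> [[uw euw sP P0 Pl] [wP Pr]] ik kP hk hk'.
have sQ : size (take i.+1 P ++ drop k P) = i.+1 + (size P - k).
  by rewrite size_cat size_takel ?size_drop //; lia.
have nQ := fun m => @nth_splice P i k m (ltnW ik) kP.
split; last by rewrite sQ; lia.
split; [split => // | split].
- rewrite sQ; case: (ltnP k (size P)) => hkP; first lia.
  have kS : k = size P by lia.
  case: i ik hk hk' {nQ sQ} => [|i] ik hk hk' //.
  by move: uw; rewrite -P0 (hk' kS) -Pl eqxx.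
- by rewrite nQ.
- rewrite nQ sQ; case: ifP => h.
    have kS : k = size P by lia.
    rewrite (_ : (i.+1 + (size P - k)).-1 = i); last lia.
    exact: hk'.
  by rewrite -Pl; congr (nth _ _ _); lia.
- move=> m; rewrite sQ => hm; rewrite !nQ.
  case: (ltnP m.+1 i.+1) => h1.
    by rewrite (ltn_trans _ h1) //; apply: wP; lia.
  case: (ltnP m i.+1) => h2.
    have mi : m = i by lia.
    rewrite mi subnn addn0; apply: hk; lia.
  rewrite (_ : k + (m.+1 - i.+1) = (k + (m - i.+1)).+1); last lia.
  apply: wP; lia.
- move=> x; rewrite mem_cat => /orP[/mem_take|/mem_drop] xP; exact: Pr.
Qed.

Definition chordlessb (P : seq T) :=
  [forall i : 'I_(size P), forall j : 'I_(size P),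
     e P`_i P`_j ==> (j == i.+1 :> nat) || (i == j.+1 :> nat)].

Lemma chordlessbP P : chordlessb P -> chordless P.
Proof.
move=> /forallP h i j hi hj eij.
have := h (Ordinal hi) => /forallP /(_ (Ordinal hj)) /=.
by rewrite eij.
Qed.

Lemma shorten_bad u w n P : size P <= n -> bad u w P ->
  exists Q, [/\ bad u w Q, uniq Q & chordless Q].
Proof.
elim: n P => [|n IH] P sP bP.
  by case: bP => [[_ _ s1]]; lia.
case: (boolP (uniq P)) => uP.
  case: (boolP (chordlessb P)) => cP.
    by exists P; split => //; apply: chordlessbP.
  move: cP; rewrite negb_forall => /existsP [i]; rewrite negb_forall => /existsP [j].
  rewrite negb_imply negb_or => /andP[eij /andP[ji ij]].
  have wlog_ij : exists a b, [/\ a.+1 < b, b < size P & e P`_a P`_b].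
    case: (ltngtP i j) => h.
    - exists i, j; split; [by move: ji => /eqP; lia | exact: ltn_ord | exact: eij].
    - exists j, i; split; [by move: ij => /eqP; lia | exact: ltn_ord | by rewrite esym].
    - by move: eij; rewrite h eirr.
  case: wlog_ij => a [b [ab bsP eab]].
  have [bQ sQ] := splice bP ab (ltnW bsP) (fun _ => eab) (fun h => ltac:(exfalso; lia)).
  apply: IH bQ; lia.
move: uP => /(uniqPn x0) [i [j [ij jP eq]]].
have [bQ sQ] := @splice u w P i j.+1 bP ltac:(lia) jP
  (fun h => ltac:(rewrite eq; case: bP => [_ [wP _]]; exact: wP h))
  (fun h => ltac:(rewrite eq; case: bP => [[_ _ _ _ Pl] _]; rewrite -Pl; congr nth; lia)).
apply: IH bQ; lia.
Qed.


Lemma bad_rev u w P : bad u w P -> bad w u (rev P).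
Proof.
case=> [[uw euw sP P0 Pl] [wP Pr]].
split; [split | split].
- by rewrite eq_sym.
- by rewrite esym.
- by rewrite size_rev.
- by rewrite nth_rev ?size_rev; [rewrite subn1 | lia].
- rewrite size_rev nth_rev; last lia.
  by rewrite (_ : size P - (size P).-1.+1 = 0) //; lia.
- move=> i; rewrite size_rev => hi; rewrite !nth_rev; try lia.
  rewrite esym; rewrite (_ : size P - i.+1 = (size P - i.+2).+1); last lia.
  apply: wP; lia.
- move=> x; rewrite mem_rev => xP xw xu; rewrite andbC; exact: Pr.
Qed.

Lemma no_bad M u w P : maxn (r u) (r w) < M -> ~ bad u w P.
Proof.
elim: M u w P => [|M IH] u w P hM bP; first lia.
wlog ruw : u w P hM bP / r u < r w.
  move=> H; case: (ltngtP (r u) (r w)) => h; first exact: H hM bP h.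
    apply: (H w u (rev P)) => //; first by rewrite maxnC.
    exact: bad_rev.
  by case: bP => [[/eqP uw _ _ _ _] _]; apply: uw; apply: rinj.
have [Q [bQ uQ cQ]] := shorten_bad (leqnn (size P)) bP.
case: (bQ) => [[uw euw sQ Q0 Ql] [wQ Qr]].
have sQ3 : 2 < size Q.
  case: (ltngtP (size Q) 2) => h; try lia.
  have e01 := wQ 0 ltac:(lia).
  have q1 : Q`_1 = w by rewrite -Ql h.
  by move: e01; rewrite Q0 q1 (negbTE euw).
set x1 := Q`_1.
have x1Q : x1 \in Q by apply: (mem_nth x0 (_ : 1 < size Q)); lia.
have x1u : x1 != u.
  by rewrite -Q0 /x1 nth_uniq // (ltn_trans _ sQ3).
have x1w : x1 != w.
  rewrite -Ql /x1 nth_uniq //; by case: (size Q) sQ3 => [|[|[|k]]].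
have /andP[rux1 rwx1] := Qr _ x1Q x1u x1w.
have eux1 : e u x1 by rewrite -Q0; apply: wQ; lia.
have [d rdw /andP[edw edx1]] := Pprop ruw rwx1 eux1 euw.
have du : d != u by apply: contraNneq euw => <-.
have dw : d != w by apply: contraTneq edw => ->; rewrite eirr.
have edu : e d u.
  apply/negPn/negP => ndu; apply: (IH d u (d :: rev Q)); first lia.
  split; [split | split].
  - exact: du.
  - exact: ndu.
  - by rewrite /= size_rev; lia.
  - by [].
  - rewrite /= size_rev.
    have s0 : 0 < size Q by apply: ltn_trans sQ3.
    have -> : (d :: rev Q)`_(size Q) = (rev Q)`_((size Q).-1) by case: (size Q) s0.
    by rewrite nth_rev prednK // subnn Q0.
  - move=> [|i] /=; rewrite size_rev => hi.
      have s0 : 0 < size Q by apply: ltn_trans sQ3.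
      by rewrite nth_rev // subn1 Ql.
    have i1 : i < size Q by move: hi; clear; lia.
    have i2 : i.+1 < size Q by move: hi; clear; lia.
    rewrite !nth_rev // esym.
    have -> : size Q - i.+1 = (size Q - i.+2).+1 by move: hi; clear; lia.
    apply: wQ; move: hi; clear; lia.
  - move=> x; rewrite in_cons mem_rev => /orP[/eqP -> |xQ]; first by rewrite eqxx.
    move=> _ xu; case: (eqVneq x w) => [->|xw]; first by rewrite rdw ruw.
    have /andP[h1 h2] := Qr x xQ xu xw.
    by rewrite h1 (ltn_trans rdw h2).
have dQ : d \notin Q.
  apply/negP => dQ; have /andP[_ h] := Qr d dQ du dw; lia.
apply: (@no_fan Q d) => //; by rewrite ?Q0 ?Ql.
Qed.

Lemma mns_clique a b v : r a < r v -> r b < r v -> e a v -> e b v -> a != b -> e a b.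
Proof.
move=> av bv eav ebv ab; apply/negPn/negP => nab.
apply: (@no_bad (maxn (r a) (r b)).+1 a b [:: a; v; b]) => //.
split; [split | split] => //.
- by move=> [|[|i]] //= _; rewrite esym.
- move=> x; rewrite !inE => /or3P[/eqP->|/eqP->|/eqP->]; rewrite ?eqxx //.
  by rewrite av bv.
Qed.

End Chord.

Section Order.
Variable T : finType.
Variable e : rel T.
Variable s : T.
Hypothesis esym : symmetric e.
Hypothesis eirr : irreflexive e.
Hypothesis conn : connected_graph e.
Hypothesis chord : chordal e.
Variable lab1 : seq T -> T -> seq nat.
Hypothesis g1 : goodlab e s lab1.
Variable sigma : seq T.
Hypothesis so : search_order lab1 s sigma.

Definition pos x := index x sigma.

Lemma all_in_vo (rho : seq T) x : vertex_order rho -> x \in rho.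
Proof.
case/andP => u /eqP sz; apply/negPn/negP => xr.
have : #|predU1 x (mem rho)| <= #|T| by apply: max_card.
by rewrite cardU1 xr (card_uniqP u) sz add1n ltnn.
Qed.

Lemma sig_vo : vertex_order sigma. Proof. by case: so. Qed.
Lemma sig_uniq : uniq sigma. Proof. by case/andP: sig_vo. Qed.
Lemma sig_in x : x \in sigma. Proof. exact: all_in_vo sig_vo. Qed.

Lemma pos_inj x y : pos x = pos y -> x = y.
Proof.
by move=> h; rewrite -(nth_index s (sig_in x)) -(nth_index s (sig_in y)) -/(pos x) h.
Qed.

Lemma pos_s : pos s = 0.
Proof. by case: so => _ [+ _]; rewrite /pos; case: sigma => //= a l [->]; rewrite eqxx. Qed.

Lemma pos_s_lt v : v != s -> 0 < pos v.
Proof. move=> vs; rewrite lt0n; apply/negP => /eqP h; move/eqP: vs; apply; apply: pos_inj; by rewrite h pos_s. Qed.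

Lemma search_le b w : pos b <= pos w ->
  lexle (lab1 (take (pos b) sigma) w) (lab1 (take (pos b) sigma) b).
Proof.
move=> bw; case: so => _ [_ H].
have pb : pos b < size sigma by rewrite /pos index_mem sig_in.
apply: (H _ (drop (pos b).+1 sigma)).
  by rewrite -{1}(cat_take_drop (pos b) sigma) (drop_nth s pb) nth_index // sig_in.
have := sig_in w; rewrite -{1}(cat_take_drop (pos b) sigma) (drop_nth s pb) nth_index ?sig_in //.
by rewrite mem_cat in_take ?sig_in // -/(pos w) ltnNge bw.
Qed.

Lemma take_props b : [/\ uniq (take (pos b) sigma), (0 < pos b -> s \in take (pos b) sigma) &
   forall x, (x \in take (pos b) sigma) = (pos x < pos b)].
Proof.
split; first exact: take_uniq sig_uniq.
  by move=> h; rewrite in_take ?sig_in // -/(pos s) pos_s.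
by move=> x; rewrite in_take ?sig_in.
Qed.

Lemma Pprop a b c : pos a < pos b -> pos b < pos c -> e a c -> ~~ e a b ->
  exists2 d, pos d < pos b & e d b && ~~ e d c.
Proof.
move=> ab bc eac eab.
case: (boolP [exists d, (pos d < pos b) && e d b && ~~ e d c]) => [/existsP[d /andP[/andP[h1 h2] h3]]|H].
  by exists d => //; rewrite h2 h3.
case: g1 => _ _ str.
have [up sp memp] := take_props b.
have hle := search_le (ltnW bc); exfalso; move: hle.
apply/negP; apply: str => //.
- by apply: sp; apply: leq_ltn_trans ab.
- by rewrite memp ltnn.
- by rewrite memp ltnNge (ltnW bc).
- move=> x; rewrite memp => xb exb; apply/negPn/negP => nexc.
  by move/existsP: H; apply; exists x; rewrite xb exb nexc.
- by exists a; rewrite ?memp ?eac.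
Qed.

Lemma clique a b v : pos a < pos v -> pos b < pos v -> e a v -> e b v -> a != b -> e a b.
Proof.
apply: (@mns_clique T e esym eirr s chord pos pos_inj Pprop).
Qed.

Lemma crossing (A : pred T) x y : A x -> ~~ A y -> connect e x y ->
  exists a b, [/\ A a, ~~ A b & e a b].
Proof.
move=> Ax Ay /connectP [q pq yl]; rewrite yl {yl y} in Ay.
elim: q x Ax pq Ay => [|z q IH] x Ax /=; first by rewrite Ax.
case/andP => exz pq Al.
case: (boolP (A z)) => Az; first exact: IH Az pq Al.
by exists x, z.
Qed.

Lemma earlier_nb v : v != s -> exists2 x, pos x < pos v & e x v.
Proof.
move=> vs.
case: (boolP [exists x, (pos x < pos v) && e x v]) => [/existsP[x /andP[h1 h2]]|H].
  by exists x.
have [up sp memp] := take_props v.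
have sin : s \in take (pos v) sigma by apply: sp; apply: pos_s_lt.
have vnin : v \notin take (pos v) sigma by rewrite memp ltnn.
have [a [b [/= ain bnin eab]]] := @crossing (fun x => pos x < pos v) s v
   ltac:(by rewrite /= pos_s pos_s_lt) ltac:(by rewrite /= ltnn) (conn s v).
rewrite /= -leqNgt in bnin.
case: g1 => _ _ str.
have hle := search_le bnin; exfalso; move: hle; apply/negP; apply: str => //.
- by rewrite memp -leqNgt.
- move=> x; rewrite memp => xv exv; move/existsP: H; case; exists x; by rewrite xv exv.
- exists a; first by rewrite memp.
  rewrite eab /=; apply/negP => eav; move/existsP: H; case; exists a.
  by rewrite ain eav.
Qed.

Definition islast (rho : seq T) v x :=
  (index x rho < index v rho) && e x v &&
  [forall y, ((index x rho < index y rho) && (index y rho < index v rho)) ==> ~~ e y v].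

Lemma islast_uniq rho v x x' : {in rho &, injective (index^~ rho)} -> x \in rho -> x' \in rho ->
  islast rho v x -> islast rho v x' -> x = x'.
Proof.
move=> inj xr x'r /andP[/andP[h1 h2] /forallP h3] /andP[/andP[h1' h2'] /forallP h3'].
case: (ltngtP (index x rho) (index x' rho)) => h.
- by move: (h3 x'); rewrite h h1' h2'.
- by move: (h3' x); rewrite h h1 h2.
- exact: inj.
Qed.

Lemma pos_inj_in : {in sigma &, injective (index^~ sigma)}.
Proof. by move=> x y _ _; apply: pos_inj. Qed.

Definition par v := odflt s [pick x | islast sigma v x].

Lemma par_spec v : v != s -> islast sigma v (par v).
Proof.
move=> vs; rewrite /par; case: pickP => [x //|H]; exfalso.
have [x xv exv] := earlier_nb vs.
pose P k := (k < pos v) && e (nth s sigma k) v.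
have exP : exists k, P k by exists (pos x); rewrite /P xv nth_index ?sig_in.
have ub : forall k, P k -> k <= pos v by move=> k /andP[/ltnW].
case: (ex_maxnP exP ub) => k /andP[kv ekv] kmax.
have kS : k < size sigma.
  apply: (ltn_trans kv); by rewrite /pos index_mem sig_in.
move: (H (nth s sigma k)); rewrite /islast index_uniq ?sig_uniq // -/(pos v) kv ekv /=.
move/negbT => /forallPn [y]; rewrite negb_imply negbK => /andP[/andP[ky yv] eyv].
have := kmax (pos y); rewrite /P -/(pos y) yv nth_index ?sig_in // eyv => /(_ erefl).
by rewrite leqNgt ky.
Qed.

Lemma par_lt v : v != s -> pos (par v) < pos v.
Proof. by move/par_spec => /andP[/andP[]]. Qed.

Lemma par_e v : v != s -> e (par v) v.
Proof. by move/par_spec => /andP[/andP[]]. Qed.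

Lemma par_last v y : v != s -> pos (par v) < pos y -> pos y < pos v -> ~~ e y v.
Proof. by move/par_spec => /andP[_ /forallP h] h1 h2; move: (h y); rewrite /pos in h1 h2 *; rewrite h1 h2. Qed.

Inductive anc : T -> T -> Prop :=
| ancP v : v != s -> anc (par v) v
| ancS x v : v != s -> anc x (par v) -> anc x v.

Lemma anc_inv y v : anc y v -> y = par v \/ anc y (par v).
Proof. by case=> [w _|x w _ h]; [left|right]. Qed.

Lemma normal v y : pos y < pos v -> e y v -> anc y v.
Proof.
move: {2}(pos v) (leqnn (pos v)) => n; elim: n v y => [|n IH] v y vn yv eyv.
  by move: yv vn; clear; lia.
have vs : v != s by apply/negP => /eqP vs; move: yv; rewrite vs pos_s.
case: (eqVneq y (par v)) => [->|ypv]; first exact: ancP.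
have ypos : pos y < pos (par v).
  case: (ltngtP (pos y) (pos (par v))) => // h.
    by move: (par_last vs h yv); rewrite eyv.
  by move: ypv; rewrite (pos_inj h) eqxx.
apply: ancS => //; apply: IH => //.
  by move: (par_lt vs) vn; clear; lia.
apply: clique yv (par_lt vs) eyv (par_e vs) ypv.
Qed.


Lemma anc_in (p : seq T) z x : (forall v, v \in p -> v != s -> par v \in p) ->
  anc z x -> x \in p -> z \in p.
Proof.
move=> dc; elim=> [v vs vp|y v vs _ IH vp]; first exact: dc.
by apply: IH; apply: dc.
Qed.

Lemma frontier (p : seq T) m : s \in p -> (forall v, v \in p -> v != s -> par v \in p) ->
  m \notin p -> exists y, [/\ y \notin p, y != s, par y \in p &
     forall x, x \in p -> e x m -> e x y].
Proof.
move=> sp dc; move: {2}(pos m) (leqnn (pos m)) => n.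
elim: n m => [|n IH] m mn mp.
  have ms : m != s by apply: contraNneq mp => ->.
  by move: (pos_s_lt ms) mn; clear; lia.
have ms : m != s by apply: contraNneq mp => ->.
case: (boolP (par m \in p)) => pmp; first by exists m.
have sub : forall x, x \in p -> e x m -> e x (par m).
  move=> x xp exm.
  have xm : x != m by apply: contraNneq mp => <-.
  case: (ltngtP (pos x) (pos m)) => h.
  - apply: clique h (par_lt ms) exm (par_e ms) _.
    by apply: contraNneq pmp => <-.
  - have emx : e m x by rewrite esym.
    have := normal h emx.
    by move/anc_in => /(_ p dc xp); rewrite (negbTE mp).
  - by move: xm; rewrite (pos_inj h) eqxx.
have [y [yp ys py hy]] := IH (par m) ltac:(move: (par_lt ms) mn; clear; lia) pmp.
by exists y; split => // x xp exm; apply: hy => //; apply: sub.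
Qed.

Lemma lex_max (f : T -> seq nat) (l : seq T) : l != [::] ->
  exists2 m, m \in l & forall w, w \in l -> lexle (f w) (f m).
Proof.
elim: l => // a l IH _.
case: (eqVneq l [::]) => [->|ln].
  by exists a; rewrite ?mem_head // => w; rewrite inE => /eqP ->; apply: lexle_refl.
have [m ml hm] := IH ln.
case/orP: (lexle_total (f a) (f m)) => h.
  exists m; first by rewrite inE ml orbT.
  by move=> w; rewrite inE => /orP[/eqP ->|]; [exact: h| exact: hm].
exists a; first exact: mem_head.
move=> w; rewrite inE => /orP[/eqP ->|wl]; first exact: lexle_refl.
exact: lexle_trans (hm _ wl) h.
Qed.

Variable lab2 : seq T -> T -> seq nat.
Hypothesis g2 : goodlab e s lab2.

Definition good_prefix (p : seq T) :=
  [/\ uniq p, (0 < size p -> nth s p 0 = s),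
   (forall v, v \in p -> v != s -> (par v \in p) && (index (par v) p < index v p)) &
   (forall i, i < size p -> forall w, w \notin take i p ->
      lexle (lab2 (take i p) w) (lab2 (take i p) (nth s p i)))].

Lemma build k : k <= #|T| -> exists p, size p = k /\ good_prefix p.
Proof.
elim: k => [|k IH] kT.
  by exists [::]; split => //; split => //.
have [p [sz [up p0 pp pl]]] := IH (ltnW kT).
case: (posnP k) => k0.
  move: sz; rewrite k0; case: p {p0 pp pl up} => // _.
  exists [:: s]; split => //; split => //.
  - by move=> v; rewrite inE => /eqP ->; rewrite eqxx.
  - by move=> [|i] //= _ w _; case: g2.
have sp : s \in p by rewrite -(p0 ltac:(by rewrite sz)); apply: mem_nth; rewrite sz.
have dc : forall v, v \in p -> v != s -> par v \in p by move=> v vp vs; case/andP: (pp v vp vs).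
have U0 : [seq w <- enum T | w \notin p] != [::].
  apply/negP => /eqP U0.
  have allp : forall w, w \in p.
    move=> w; apply/negPn/negP => wp.
    have : w \in [seq w <- enum T | w \notin p] by rewrite mem_filter wp mem_enum.
    by rewrite U0.
  have : #|T| <= size p.
    rewrite -(card_uniqP up); apply: subset_leq_card; apply/subsetP => x _; exact: allp.
  by rewrite sz leqNgt kT.
have [m mU hm] := lex_max (lab2 p) U0.
rewrite mem_filter in mU; case/andP: mU => mp _.
have [y [yp ys py hy]] := frontier sp dc mp.
case: g2 => _ mono _.
have ymax : forall w, w \notin p -> lexle (lab2 p w) (lab2 p y).
  move=> w wp; apply: lexle_trans (hm w _) (mono _ _ _ up sp mp yp hy).
  by rewrite mem_filter wp mem_enum.
exists (rcons p y); split; first by rewrite size_rcons sz.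
split.
- by rewrite rcons_uniq yp up.
- by move=> _; rewrite nth_rcons sz k0 p0 // sz.
- move=> v; rewrite mem_rcons inE => /orP[/eqP ->|vp] vs.
    rewrite mem_rcons inE py orbT /= -!cats1 !index_cat py (negbTE yp) /= eqxx addn0.
    by rewrite index_mem.
  case/andP: (pp v vp vs) => h1 h2.
  by rewrite mem_rcons inE h1 orbT /= -!cats1 !index_cat h1 vp.
- move=> i; rewrite size_rcons ltnS leq_eqVlt => /orP[/eqP ->|ip] w.
    by rewrite -cats1 take_size_cat // nth_cat ltnn subnn /=; apply: ymax.
  rewrite -cats1 take_cat ip nth_cat ip; exact: pl.
Qed.


Lemma tau_exists : exists tau, [/\ search_order lab2 s tau, vertex_order tau &
   forall v, v != s -> index (par v) tau < index v tau].
Proof.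
have [p [sz [up p0 pp pl]]] := build (leqnn #|T|).
have T0 : 0 < #|T| by apply/card_gt0P; exists s.
have vo : vertex_order p by rewrite /vertex_order up sz eqxx.
exists p; split => //.
- split => //; split.
    case: p sz p0 {up pp pl vo} => [|a l] sz p0; first by rewrite -sz in T0.
    by rewrite /= -(p0 erefl).
  move=> p1 v q E w wq.
  have i_lt : size p1 < size p by rewrite E size_cat /= addnS ltnS leq_addr.
  have := pl (size p1) i_lt w.
  rewrite E take_size_cat // nth_cat ltnn subnn /=; apply.
  move: up; rewrite E cat_uniq => /and3P[_ /hasPn H _].
  exact: H.
- move=> v vs; case/andP: (pp v (all_in_vo v vo) vs) => _ ->.
  done.
Qed.


Lemma tnth_in (rho : seq T) (i : 'I_(size rho)) x0 :
  tnth (in_tuple rho) i = nth x0 rho i.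
Proof. by rewrite (tnth_nth x0). Qed.

Lemma Ltree_char (rho : seq T) f :
  vertex_order rho ->
  (f \in Ltree e rho) = [exists v, exists x, islast rho v x && (f == [set v; x])].
Proof.
move=> vo; have ur : uniq rho by case/andP: vo.
have inr := fun x => all_in_vo x vo.
rewrite /Ltree inE; apply/existsP/existsP.
- case=> i /existsP [j].
  have d := tnth (in_tuple rho) i.
  rewrite !(tnth_in _ d).
  case/and4P => ji evv /forallP hk /eqP ->.
  exists (nth d rho i); apply/existsP; exists (nth d rho j); rewrite eqxx andbT.
  rewrite /islast !index_uniq // ji evv /=.
  apply/forallP => y; apply/implyP => /andP[jy yi].
  have yr : index y rho < size rho by rewrite index_mem.
  move: (hk (Ordinal yr)); rewrite (tnth_in _ d) /= jy yi /= nth_index //; exact.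
- case=> v /existsP [x /andP[/andP[/andP[xv exv] /forallP hy] /eqP ->]].
  have vr : index v rho < size rho by rewrite index_mem.
  have xr : index x rho < size rho by rewrite index_mem.
  exists (Ordinal vr); apply/existsP; exists (Ordinal xr).
  rewrite !(tnth_in _ x) /= !nth_index // xv exv eqxx andbT /=.
  apply/forallP => k; apply/implyP => /andP[xk kv].
  rewrite (tnth_in _ x).
  have := hy (nth x rho k); rewrite index_uniq // xk kv /=; exact.
Qed.

Lemma index_head (rho : seq T) : ohead rho = Some s -> index s rho = 0.
Proof. by case: rho => //= a l [->]; rewrite eqxx. Qed.

Lemma Ltree_transfer : exists tau, search_order lab2 s tau /\ Ltree e tau = Ltree e sigma.
Proof.
have [tau [stau vot ptau]] := tau_exists.
have ts : index s tau = 0 by case: stau => _ [+ _]; apply: index_head.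
have inj_t : {in tau &, injective (index^~ tau)}.
  by move=> x y xt _ h; rewrite -(nth_index s xt) h nth_index // (all_in_vo y vot).
have anc_t : forall x v, anc x v -> index x tau < index v tau.
  by move=> x v; elim=> [w ws|y w ws _ IH]; [exact: ptau | exact: ltn_trans IH (ptau _ ws)].
have key : forall v, v != s -> islast tau v (par v).
  move=> v vs; rewrite /islast ptau // par_e //=.
  apply/forallP => y; apply/implyP => /andP[h1 h2]; apply/negP => eyv.
  have yv : y != v by apply: contraTneq eyv => ->; rewrite eirr.
  case: (ltngtP (pos y) (pos v)) => h.
  - case: (anc_inv (normal h eyv)) => [ey|ay].
      by move: h1; rewrite ey ltnn.
    by move: (anc_t _ _ ay); rewrite ltnNge (ltnW h1).
  - have evy : e v y by rewrite esym.
    by move: (anc_t _ _ (normal h evy)); rewrite ltnNge (ltnW h2).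
  - by move: yv; rewrite (pos_inj h) eqxx.
exists tau; split => //.
apply/setP => f; rewrite (Ltree_char _ vot) (Ltree_char _ sig_vo).
apply/existsP/existsP => -[v /existsP [x /andP[hl hf]]]; exists v; apply/existsP; exists x;
  rewrite hf andbT.
- have vs : v != s.
    by apply: contraTneq hl => ->; rewrite /islast ts ltn0.
  have -> : x = par v.
    apply: (islast_uniq inj_t) hl (key v vs); exact: all_in_vo vot.
  exact: par_spec.
- have vs : v != s.
    by apply: contraTneq hl => ->; rewrite /islast -/(pos s) pos_s ltn0.
  have -> : x = par v.
    apply: (islast_uniq pos_inj_in) hl (par_spec vs); exact: sig_in.
  exact: key.
Qed.

End Order.

Theorem corollary15 (T : finType) (e : rel T) (s : T) (F : {set {set T}}) :
  simple_graph e -> connected_graph e -> chordal e ->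
  spanning_tree e F ->
  (is_LexDFS_Ltree e s F <-> is_LexBFS_Ltree e s F).
Proof.
move=> [esym eirr] conn chord _; split.
- case=> sigma [so <-].
  exact: (Ltree_transfer esym eirr conn chord (goodlab_dfs e s) so (goodlab_bfs e s)).
- case=> sigma [so <-].
  exact: (Ltree_transfer esym eirr conn chord (goodlab_bfs e s) so (goodlab_dfs e s)).
Qed.
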